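(* Let $n,m\ge 4$, $N = 2^{n-1}$, $M = 2^{m-1}$, $\alpha = 2^{n-2}-1$, $\beta = 2^{m-2}-1$, and let $G = HK$ be an exact product with $H = \langle x\rangle\rtimes\langle y\rangle\cong\mathrm{SD}_{2^n}$ ($x^N = y^2 = 1$, $x^y = x^\alpha$) and $K = \langle z\rangle \rtimes\langle w\rangle \cong \mathrm{SD}_{2^m}$ ($z^M = w^2 = 1$, $z^w = z^\beta$), such that $[x,z] = 1$, $[z,y] = x^r z^a$, $[x,w] = x^s z^b$ and $[y,w] = x^tz^c$ for some $r,s,t \in \mathbb{Z}_N$, $a,b,c\in\mathbb{Z}_M$. Let $n_1$ be a divisor of $N$ and $m_1$ a divisor of $M$. Then $\langle x^{n_1}\rangle$ is the core of $\langle x\rangle$ in $G$ if and only if $b$ has additive order exactly $n_1$ in $\mathbb{Z}_M$; and $\langle z^{m_1}\rangle$ is the core of $\langle z\rangle$ in $G$ if and only if $r$ has additive order exactly $m_1$ in $\mathbb{Z}_N$.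
   Context: Conventions: $[g,h] = g^{-1}h^{-1}gh$, $g^h = h^{-1}gh$. The core of a subgroup $X\le G$ is the largest normal subgroup of $G$ contained in $X$. An exact product $G = HK$ means $G = HK$ with $H\cap K = \{1\}$. $\mathrm{SD}_{2^n}$ denotes the semidihedral group of order $2^n$. *)

(* Defs.v *)
From mathcomp Require Import all_boot all_order all_algebra all_fingroup all_solvable.
Set Implicit Arguments.
Unset Strict Implicit.
Unset Printing Implicit Defensive.

(* Main.v *)
Require Import Defs.
From mathcomp Require Import all_boot all_order all_algebra all_fingroup all_solvable.

Local Open Scope group_scope.

Lemma ordZ (gT : finGroupType) (g : gT) M (c : 'Z_M) :
  (1 < M)%N -> #[g] = M -> #[g ^+ c] = #[c].
Proof.
move=> M1 og.
rewrite -{2}(Zp1_expgz c) !orderXgcd order_Zp1 og.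
have eM := Zp_cast M1.
by rewrite -[X in X %/ _ = _]eM -[X in _ %/ gcdn X _ = _]eM.
Qed.

Lemma core_cyc (gT : finGroupType) (G A : {group gT}) (X Z v : gT) (p e : nat) :
  (A * (<[Z]> * <[v]>)) = G -> A \subset 'N(<[X]>) -> commute X Z ->
  <[X]> :&: <[Z]> = 1 -> X ^ v = X ^+ p * Z ^+ e ->
  (#[Z ^+ e] %| #[X])%N /\ gcore <[X]> G = <[X ^+ #[Z ^+ e]]>.
Proof.
move=> hG hA hXZ hI hv.
set o := #[Z ^+ e]; set u := X ^ v.
have vG : v \in G.
  by have := mem_mulg (group1 A) (mem_mulg (group1 <[Z]>) (cycle_id v));
     rewrite !mul1g hG.
have cXZ' : commute (X ^+ p) (Z ^+ e) by apply: commuteX2.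
have uk k : u ^+ k = X ^+ (p * k) * Z ^+ (e * k).
  by rewrite /u hv expgMn // !expgM.
have Z1 k : Z ^+ k \in <[X]> -> Z ^+ k = 1.
  move=> h; apply/set1P; rewrite -[[set 1]]/(1 : {set gT}) -hI inE h mem_cycle //.
have key k : u ^+ k \in <[X]> -> (o %| k)%N.
  move=> h; rewrite order_dvdn -expgM; apply/eqP/Z1.
  have -> : Z ^+ (e * k) = (X ^+ (p * k))^-1 * u ^+ k by rewrite uk mulKg.
  by rewrite groupM ?groupV ?mem_cycle.
have ou : #[u] = #[X] by rewrite /u orderJ.
have oN : (o %| #[X])%N by apply: key; rewrite -ou expg_order group1.
have eqC : <[u ^+ o]> = <[X ^+ o]>.
  apply/eqP; rewrite (eq_subG_cyclic (cycle_cyclic X)) ?cycleX //; last first.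
    by rewrite cycle_subG uk [Z ^+ _]expgM expg_order mulg1 mem_cycle.
  by change (#[u ^+ o] == #[X ^+ o]); rewrite !orderXdiv ?ou.
have Cn : v \in 'N(<[X ^+ o]>).
  by apply/normP; rewrite -cycleJ conjXg.
split=> //.
apply/eqP; rewrite eqEsubset; apply/andP; split.
  apply/subsetP => g gQ.
  have gX : g \in <[X]> := subsetP (gcore_sub _ _) g gQ.
  have : g \in gcore <[X]> G :^ v by rewrite (normP (subsetP (gcore_norm _ _) v vG)).
  have sub : gcore <[X]> G :^ v \subset <[X]> :^ v by rewrite conjSg gcore_sub.
  move/(subsetP sub); rewrite -cycleJ -/u.
  case/cycleP => k gk; rewrite gk in gX.
  have /dvdnP [j kj] := key k gX.
  by rewrite gk kj mulnC expgM -eqC mem_cycle.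
apply: gcore_max; first exact: cycleX.
rewrite -hG; apply: mul_subG.
  exact: char_norm_trans (cycle_subgroup_char (cycleX X o)) hA.
apply: mul_subG; rewrite cycle_subG //.
apply: (subsetP (char_norm_trans (cycle_subgroup_char (cycleX X o)) _)); last first.
  exact: cycle_id.
rewrite cycle_subG; apply/normP; rewrite -cycleJ.
by move/commgP/conjg_fixP: hXZ => ->.
Qed.

Lemma divdiv N d : (0 < N)%N -> (d %| N)%N -> N %/ (N %/ d) = d.
Proof. by move=> N0 dN; rewrite divnA // mulKn. Qed.

Lemma cyc_iff (gT : finGroupType) (x : gT) o n1 :
  (o %| #[x])%N -> (n1 %| #[x])%N ->
  (<[x ^+ o]> = <[x ^+ n1]> <-> o = n1).
Proof.
move=> ho hn; split=> [h|->] //.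
have : #[x ^+ o] = #[x ^+ n1] by rewrite /order h.
rewrite !orderXdiv // => e.
by rewrite -(@divdiv _ _ (order_gt0 x) ho) e divdiv ?order_gt0.
Qed.

Theorem lemma6p4 (gT : finGroupType) (G H K : {group gT}) (x y z w : gT)
    (n m : nat) (hn : (4 <= n)%N) (hm : (4 <= m)%N)
    (r s t : 'Z_(2 ^ n.-1)) (a b c : 'Z_(2 ^ m.-1)) (n1 m1 : nat)
    (hH : <[x]> ><| <[y]> = H) (hox : #[x] = (2 ^ n.-1)%N) (hoy : #[y] = 2%N)
    (hxy : x ^ y = x ^+ (2 ^ (n - 2) - 1)%N)
    (hK : <[z]> ><| <[w]> = K) (hoz : #[z] = (2 ^ m.-1)%N) (how : #[w] = 2%N)
    (hzw : z ^ w = z ^+ (2 ^ (m - 2) - 1)%N)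
    (hG : H * K = G) (hHK : H :&: K = 1)
    (hxz : [~ x, z] = 1)
    (hzy : [~ z, y] = x ^+ r * z ^+ a)
    (hxw : [~ x, w] = x ^+ s * z ^+ b)
    (hyw : [~ y, w] = x ^+ t * z ^+ c)
    (hn1 : (n1 %| 2 ^ n.-1)%N) (hm1 : (m1 %| 2 ^ m.-1)%N) :
  (gcore <[x]> G = <[x ^+ n1]> <-> #[b] = n1) /\
  (gcore <[z]> G = <[z ^+ m1]> <-> #[r] = m1).
Proof.
have [nxH _ eH _ _] := sdprod_context hH.
have [nzK _ eK _ _] := sdprod_context hK.
have cxz : commute x z by apply/commgP/eqP.
have xH : x \in H by rewrite -cycle_subG (normal_sub nxH).
have zK : z \in K by rewrite -cycle_subG (normal_sub nzK).
have I1 : <[x]> :&: <[z]> = 1.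
  by apply/trivgP; rewrite -hHK setISS ?cycle_subG.
have M1 : (1 < 2 ^ m.-1)%N by rewrite -{1}(expn0 2) ltn_exp2l // -subn1 subn_gt0 (leq_trans _ hm).
have N1 : (1 < 2 ^ n.-1)%N by rewrite -{1}(expn0 2) ltn_exp2l // -subn1 subn_gt0 (leq_trans _ hn).
split.
  have e1 : H * (<[z]> * <[w]>) = G by rewrite eK.
  have e2 : x ^ w = x ^+ s.+1 * z ^+ b by rewrite conjg_mulR hxw mulgA -expgS.
  have [od ->] := @core_cyc _ _ _ _ _ _ _ _ e1 (normal_norm nxH) cxz I1 e2.
  rewrite (@ordZ _ z _ b M1 hoz) in od *.
  by apply: cyc_iff; rewrite // hox.
have eG : K * H = G.
  have : commute H K by apply/comm_group_setP; rewrite hG groupP.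
  by rewrite /commute hG => <-.
have czx : commute z x by [].
have I2 : <[z]> :&: <[x]> = 1 by rewrite setIC.
have e1 : K * (<[x]> * <[y]>) = G by rewrite eH.
have e2 : z ^ y = z ^+ a.+1 * x ^+ r.
  by rewrite conjg_mulR hzy (commuteX2 _ _ cxz) mulgA -expgS.
have [od ->] := @core_cyc _ _ _ _ _ _ _ _ e1 (normal_norm nzK) czx I2 e2.
rewrite (@ordZ _ x _ r N1 hox) in od *.
by apply: cyc_iff; rewrite // hoz.
Qed.
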